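(* Let $\varphi_0\in\mathrm{Mon}_+$. There exist a vector field $v\in L^2([0,1],H^1_0([0,1]))$ and a Lagrangian flow $\varphi$ associated with $v$ such that $\varphi(0,x)=\varphi_0(x)$ for all $x\in[0,1]$, and $\varphi(1,x)=1/2$ for $0<x<1$, $\varphi(1,0)=0$, $\varphi(1,1)=1$.
   Context: $\mathrm{Mon}_+$ denotes the set of nondecreasing functions $f:[0,1]\to[0,1]$ with $f(0)=0$ and $f(1)=1$. Definition (Lagrangian flow): let $v\in L^1([0,1],C([0,1]))$. A map $\varphi:[0,1]\times[0,1]\to[0,1]$, $(t,x)\mapsto\varphi(t,x)$, is a Lagrangian flow associated with $v$ if (i) $x\mapsto\varphi(t,x)$ is nondecreasing for every $t$, and (ii) for every $x$ the map $t\mapsto\varphi(t,x)$ is absolutely continuous and $\varphi(t,x)-\varphi(s,x)=\int_s^t v(r,\varphi(r,x))\,dr$ for all $0\le s<t\le 1$. *)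

(* Defs.v *)
From HB Require Import structures.
From mathcomp Require Import all_boot all_order all_algebra.
From mathcomp Require Import all_classical all_reals all_analysis.
Set Implicit Arguments. Unset Strict Implicit. Unset Printing Implicit Defensive.
Import Order.TTheory GRing.Theory Num.Theory.
Import numFieldNormedType.Exports.
Local Open Scope classical_set_scope.
Local Open Scope ring_scope.

Section Defs.
Variable R : realType.
Let I01 : set R := `[0, 1].

Definition Mon_plus (f : R -> R) : Prop :=
  [/\ (forall x, 0 <= x <= 1 -> 0 <= f x <= 1),
      (forall x y, 0 <= x -> x <= y -> y <= 1 -> f x <= f y),
      f 0 = 0 & f 1 = 1].

Definition abs_cont01 (g : R -> R) : Prop :=
  forall eps : R, 0 < eps -> exists2 delta : R, 0 < delta &
    forall (n : nat) (a b : nat -> R),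
      (forall i, (i < n)%N -> 0 <= a i /\ a i <= b i /\ b i <= 1) ->
      (forall i j, (i < j < n)%N -> b i <= a j) ->
      \sum_(i < n) (b i - a i) < delta ->
      \sum_(i < n) `|g (b i) - g (a i)| < eps.

(* v belongs to L^2([0,1], H^1_0([0,1])): there is a jointly measurable
   w(t,y) = d_y v(t,y), square integrable on [0,1]^2, such that for every t,
   v(t,.) is the primitive of w(t,.) vanishing at 0 and at 1. *)
Definition L2_H10 (v : R -> R -> R) : Prop :=
  exists w : R -> R -> R,
  [/\ measurable_fun (I01 `*` I01) (fun p : R * R => w p.1 p.2),
      (\int[(@lebesgue_measure R) \x (@lebesgue_measure R)]_(p in I01 `*` I01)
          ((w p.1 p.2) ^+ 2)%:E < +oo)%E,
      (forall t, 0 <= t <= 1 ->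
         (@lebesgue_measure R).-integrable `[0, 1] (fun y => (w t y)%:E)),
      (forall t x, 0 <= t <= 1 -> 0 <= x <= 1 ->
         (v t x)%:E = (\int[@lebesgue_measure R]_(y in `[0%R, x]%classic) (w t y)%:E)%E) &
      (forall t, 0 <= t <= 1 -> v t 1 = 0)].

Definition lagrangian_flow (v : R -> R -> R) (phi : R -> R -> R) : Prop :=
  [/\ (forall t x, 0 <= t <= 1 -> 0 <= x <= 1 -> 0 <= phi t x <= 1),
      (forall t x y, 0 <= t <= 1 -> 0 <= x -> x <= y -> y <= 1 -> phi t x <= phi t y),
      (forall x, 0 <= x <= 1 -> abs_cont01 (fun t => phi t x)),
      (forall x, 0 <= x <= 1 ->
         (@lebesgue_measure R).-integrable `[0, 1] (fun r => (v r (phi r x))%:E)) &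
      (forall x s t, 0 <= x <= 1 -> 0 <= s -> s < t -> t <= 1 ->
         (phi t x - phi s x)%:E =
           (\int[@lebesgue_measure R]_(r in `[s, t]%classic) (v r (phi r x))%:E)%E)].

End Defs.

(* Main.v *)
Require Import Defs.
From HB Require Import structures.
From mathcomp Require Import all_boot all_order all_algebra.
From mathcomp Require Import all_classical all_reals all_analysis.
From mathcomp Require Import measurable_realfun.
From mathcomp Require Import ring lra.
Import Order.TTheory GRing.Theory Num.Theory.
Import numFieldNormedType.Exports.
Local Open Scope classical_set_scope.
Local Open Scope ring_scope.

Section S.
Context {R : realType}.
Definition tau (t : R) := t * t * (3 - 2 * t).
Definition dtau (t : R) := 6 * t * (1 - t).
Definition al (t : R) := dtau t * (tau t) `^ (-1).
Definition ga (t : R) := - (dtau t * (1 - tau t) `^ (-1)).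

Lemma tau_ge0 t : 0 <= t <= 1 -> 0 <= tau t.
Proof. move=> /andP[h1 h2]; rewrite /tau; nra. Qed.
Lemma tau_le1 t : 0 <= t <= 1 -> tau t <= 1.
Proof.
move=> /andP[h1 h2]; rewrite /tau.
have : 0 <= (1 - t) * (1 - t) * (1 + 2 * t) by apply: mulr_ge0; [apply: mulr_ge0|]; lra.
nra.
Qed.

Lemma al_tau t : 0 <= t <= 1 -> al t * tau t = dtau t.
Proof.
move=> /andP[h1 h2]; rewrite /al.
have [->|t0] := eqVneq t 0; first by rewrite /dtau; ring.
have tp : 0 < tau t.
  have : 0 < t by rewrite lt_neqAle eq_sym t0.
  rewrite /tau => ?; apply: mulr_gt0; [apply: mulr_gt0|]; lra.
rewrite powR_inv1 ?ltW // -mulrA mulVf ?mulr1 //; lra.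
Qed.
Lemma ga_tau t : 0 <= t <= 1 -> ga t * (1 - tau t) = - dtau t.
Proof.
move=> /andP[h1 h2]; rewrite /ga.
have [->|t1] := eqVneq t 1; first by rewrite /dtau; ring.
have tp : 0 < 1 - tau t.
  have : t < 1 by rewrite lt_neqAle t1.
  move=> ?; have : 0 < (1 - t) * (1 - t) * (1 + 2 * t) by apply: mulr_gt0; [apply: mulr_gt0|]; lra.
  rewrite /tau; nra.
rewrite powR_inv1 ?ltW // mulNr -mulrA mulVf ?mulr1 //; lra.
Qed.
Local Notation mu := (@lebesgue_measure R).
Definition Jset (s : R) : set R := `[s / 2, 1 - s / 2].
Definition len (s x : R) : R :=
  if s / 2 < Num.min x (1 - s / 2) then Num.min x (1 - s / 2) - s / 2 else 0.

Lemma mu_cc (a b : R) : mu `[a, b]%classic = (if a < b then b - a else 0)%:E.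
Proof.
have := @lebesgue_measure_itv R `[a, b]; rewrite /= => ->; rewrite lte_fin.
by case: ifP => //; rewrite -EFinB.
Qed.

Lemma int_cst (a x : R) : mu.-integrable `[0, x] (fun y => a%:E).
Proof.
apply: (measurable_bounded_integrable (f := cst a)) => //.
  by have := @lebesgue_measure_itv R `[0, x]; rewrite /= => ->; case: ifP => _ //; rewrite -EFinD ltry.
exact: bounded_cst.
Qed.

Lemma int_ind (b s x : R) : mu.-integrable `[0, x] (fun y => (b * \1_(Jset s) y)%:E).
Proof.
rewrite (_ : (fun y => _) = (fun y => b%:E * (\1_(Jset s) y)%:E)%E); last by apply/funext=> y; rewrite EFinM.
apply: integrableZl; first exact: measurable_itv.
apply: (@integrableS _ _ _ _ setT) => //.
exact: (@integrable_indic_itv R (s/2) (1 - s/2) true false).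
Qed.

Lemma int_aff (a b s x : R) : 0 <= s -> 0 <= x ->
  (\int[mu]_(y in `[0%R, x]%classic) ((a + b * \1_(Jset s) y)%:E) = (a * x + b * len s x)%:E)%E.
Proof.
move=> s0 x0.
under eq_integral do rewrite EFinD.
rewrite integralD //; [|exact: int_cst|exact: int_ind].
under [X in (_ + X)%E]eq_integral do rewrite EFinM.
rewrite integralZl //; last first.
  apply: (@integrableS _ _ _ _ setT) => //.
  exact: (@integrable_indic_itv R (s/2) (1 - s/2) true false).
rewrite integral_cst // integral_indic //.
rewrite -[X in (a%:E * X)%E]/(mu `[0%R, x]%classic) mu_cc.
have -> : Jset s `&` `[0%R, x]%classic = `[s / 2, Num.min x (1 - s / 2)]%classic.
  apply/seteqP; split => y /=; rewrite /Jset /= !in_itv /= ?le_min.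
    move=> [/andP[h1 h2] /andP[h3 h4]]; rewrite h1 h2 h4 //.
  move=> /andP[h1 /andP[h2 h3]]; rewrite h1 h3 h2 /=; split => //; lra.
rewrite -[X in (b%:E * X)%E]/(mu `[s / 2, Num.min x (1 - s / 2)]%classic) mu_cc /len.
have -> : (if 0 < x then x - 0 else 0) = x.
  by case: ifP => h; [rewrite subr0 | move/negbT: h; rewrite -leNgt => h; apply/eqP; rewrite eq_le h x0].
rewrite -?EFinM -?EFinD; congr (_%:E); ring.
exact: measurable_itv.
Qed.

Definition w (t y : R) : R :=
  if tau t / 2 <= y then (if y <= 1 - tau t / 2 then ga t else al t) else al t.
Definition v (t x : R) : R := al t * x + (ga t - al t) * len (tau t) x.

Lemma w_aff t y : w t y = al t + (ga t - al t) * \1_(Jset (tau t)) y.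
Proof.
rewrite /w indicE /Jset mem_setE in_itv /=.
by case h1 : (tau t / 2 <= y); case h2 : (y <= 1 - tau t / 2) => /=; rewrite ?mulr1 ?mulr0 ?addr0 //; ring.
Qed.

Lemma v_int t x : 0 <= t <= 1 -> 0 <= x <= 1 ->
  (v t x)%:E = (\int[mu]_(y in `[0%R, x]%classic) (w t y)%:E)%E.
Proof.
move=> ht /andP[x0 x1].
under eq_integral do rewrite w_aff.
by rewrite int_aff // tau_ge0.
Qed.

Lemma v1 t : 0 <= t <= 1 -> v t 1 = 0.
Proof.
move=> ht; have s0 := tau_ge0 t ht; have s1 := tau_le1 t ht.
have ha := al_tau t ht; have hg := ga_tau t ht.
rewrite /v /len.
have -> : Num.min 1 (1 - tau t / 2) = 1 - tau t / 2 by apply/min_idPr; lra.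
case: ifP => h.
  nra.
have e : tau t = 1 by move/negbT: h; rewrite -leNgt => h; lra.
rewrite e subrr mulr0 in hg; rewrite e mulr1 in ha.
rewrite mulr0 addr0 ha; lra.
Qed.

Definition psi (x : R) : R := if x <= 0 then 0 else if 1 <= x then 1 else 1 / 2.
Definition phi (phi0 : R -> R) (t x : R) : R := (1 - tau t) * phi0 x + tau t * psi x.

Lemma vphi phi0 t x : Mon_plus phi0 -> 0 <= t <= 1 -> 0 <= x <= 1 ->
  v t (phi phi0 t x) = dtau t * (psi x - phi0 x).
Proof.
move=> [p01 pmon p0 p1] ht /andP[x0 x1].
have s0 := tau_ge0 t ht; have s1 := tau_le1 t ht.
have ha := al_tau t ht; have hg := ga_tau t ht.
have [->|xn0] := eqVneq x 0.
  rewrite /phi /psi lexx p0 !mulr0 addr0 subrr mulr0 /v /len mulr0 add0r.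
  case: ifP => h; last by rewrite mulr0.
  have : Num.min 0 (1 - tau t / 2) <= 0 by rewrite ge_min lexx.
  lra.
have [->|xn1] := eqVneq x 1.
  rewrite /phi /psi p1 lexx.
  have -> : (1 <= 0 :> R) = false by apply/negbTE; rewrite -ltNge ltr01.
  by rewrite subrr mulr0 !mulr1 subrK v1.
have xp : 0 < x by rewrite lt_neqAle eq_sym xn0.
have xl : x < 1 by rewrite lt_neqAle xn1.
have ps : psi x = 1 / 2.
  by rewrite /psi leNgt xp /= leNgt xl.
have /andP[a0 a1] := p01 x (introT andP (conj x0 x1)).
set a := phi0 x in a0 a1 *.
rewrite /phi ps /v.
set y := (1 - tau t) * a + tau t * (1 / 2).
have ylo : tau t / 2 <= y by rewrite /y; nra.
have yhi : y <= 1 - tau t / 2 by rewrite /y; nra.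
have -> : len (tau t) y = y - tau t / 2.
  rewrite /len (min_idPl yhi).
  case: ifP => // /negbT; rewrite -leNgt => h; lra.
have hga := congr1 (fun z => z * a) hg; simpl in hga.
rewrite /y; nra.
Qed.

Lemma mtau : measurable_fun setT (tau : R -> R).
Proof.
apply: measurable_funM; first exact: measurable_funM.
apply: measurable_funB => //; exact: measurable_funM.
Qed.
Lemma mdtau : measurable_fun setT (dtau : R -> R).
Proof.
apply: measurable_funM; first exact: measurable_funM.
exact: measurable_funB.
Qed.
Lemma mal : measurable_fun setT (al : R -> R).
Proof.
apply: measurable_funM; first exact: mdtau.
exact: measurableT_comp (measurable_powR _) mtau.
Qed.
Lemma mga : measurable_fun setT (ga : R -> R).
Proof.
apply: measurableT_comp => //; apply: measurable_funM; first exact: mdtau.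
apply: measurableT_comp (measurable_powR _) _.
by apply: measurable_funB => //; exact: mtau.
Qed.

Lemma mw2 : measurable_fun setT (fun p : R * R => w p.1 p.2).
Proof.
have mt : measurable_fun setT (fun p : R * R => tau p.1 / 2).
  apply: measurable_funM => //; exact: measurableT_comp mtau measurable_fst.
have mA : measurable_fun setT (fun p : R * R => al p.1).
  exact: measurableT_comp mal measurable_fst.
apply: measurable_fun_ifT.
- exact: measurable_fun_ler mt measurable_snd.
- apply: measurable_fun_ifT => //.
  + apply: measurable_fun_ler; first exact: measurable_snd.
    exact: measurable_funB.
  + exact: measurableT_comp mga measurable_fst.
- exact: mA.
Qed.

Lemma bound72 t : 0 <= t <= 1 ->
  al t ^+ 2 * 1 + (ga t ^+ 2 - al t ^+ 2) * len (tau t) 1 <= 72.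
Proof.
move=> ht; have s0 := tau_ge0 t ht; have s1 := tau_le1 t ht.
have ha := al_tau t ht; have hg := ga_tau t ht.
have [->|t0] := eqVneq t 0.
  by rewrite /al /ga /dtau !mulr0 !mul0r oppr0 expr0n /= !mul0r subrr mul0r addr0.
have [->|t1] := eqVneq t 1.
  by rewrite /al /ga /dtau !subrr !mulr0 !mul0r oppr0 expr0n /= !mul0r subrr mul0r addr0.
move: ht => /andP[h0 h1].
have tp : 0 < t by rewrite lt_neqAle eq_sym t0.
have tl : t < 1 by rewrite lt_neqAle t1.
have sp : 0 < tau t by rewrite /tau; apply: mulr_gt0; [apply: mulr_gt0|]; lra.
have sl : 0 < 1 - tau t.
  have : 0 < (1 - t) * (1 - t) * (1 + 2 * t) by apply: mulr_gt0; [apply: mulr_gt0|]; lra.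
  rewrite /tau; nra.
have -> : len (tau t) 1 = 1 - tau t.
  rewrite /len.
  have -> : Num.min 1 (1 - tau t / 2) = 1 - tau t / 2 by apply/min_idPr; lra.
  case: ifP => [_|/negbT]; [lra | rewrite -leNgt => h; lra].
have e1 : al t ^+ 2 * tau t <= 36.
  rewrite -(ler_pM2r sp) (_ : _ * _ * _ = (al t * tau t) ^+ 2); last by ring.
  rewrite ha /dtau /tau.
  have : 0 <= t * t * ((3 - 2 * t) - (1 - t) * (1 - t)) by apply: mulr_ge0; [apply: mulr_ge0|]; nra.
  nra.
have e2 : ga t ^+ 2 * (1 - tau t) <= 36.
  rewrite -(ler_pM2r sl) (_ : _ * _ * _ = (ga t * (1 - tau t)) ^+ 2); last by ring.
  rewrite hg /dtau /tau.
  have : 0 <= (1 - t) * (1 - t) * ((1 + 2 * t) - t * t) by apply: mulr_ge0; [apply: mulr_ge0|]; nra.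
  nra.
have -> : al t ^+ 2 * 1 + (ga t ^+ 2 - al t ^+ 2) * (1 - tau t) =
  al t ^+ 2 * tau t + ga t ^+ 2 * (1 - tau t) by ring.
lra.
Qed.

Lemma inner_bound t : 0 <= t <= 1 ->
  (\int[mu]_(y in `[0%R, 1%R]%classic) ((w t y) ^+ 2)%:E <= 72%:E)%E.
Proof.
move=> ht.
have e : forall y, (w t y) ^+ 2 =
   al t ^+ 2 + (ga t ^+ 2 - al t ^+ 2) * \1_(Jset (tau t)) y.
  move=> y; rewrite w_aff indicE.
  by case: (y \in _) => /=; ring.
under eq_integral do rewrite e.
rewrite int_aff ?tau_ge0 // lee_fin.
exact: bound72.
Qed.

Lemma prod_fin :
  (\int[(@lebesgue_measure R) \x (@lebesgue_measure R)]_(p in `[0%R, 1%R]%classic `*` `[0%R, 1%R]%classic)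
     ((w p.1 p.2) ^+ 2)%:E < +oo)%E.
Proof.
set I := `[0%R, 1%R]%classic.
set f := fun p : R * R => ((w p.1 p.2) ^+ 2)%:E.
have mI : measurable I by exact: measurable_itv.
have mII : measurable (I `*` I) by exact: measurableX.
have mf : measurable_fun setT f.
  apply/measurable_EFinP; exact: measurable_funX mw2.
have mfD : measurable_fun setT (f \_ (I `*` I)).
  by apply/(measurable_restrictT _ _).1 => //; exact: measurable_funS mf.
have f0 : forall p, (0 <= (f \_ (I `*` I)) p)%E.
  by move=> p; rewrite patchE; case: ifP => _; rewrite // lee_fin sqr_ge0.
rewrite integral_mkcond.
have H := @fubini_tonelli1 _ _ _ _ R mu mu (f \_ (I `*` I)) mfD f0.
apply: (@le_lt_trans _ _ (\int[mu]_x fubini_F mu (f \_ (I `*` I)) x)%E).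
  by rewrite le_eqVlt; apply/orP; left; apply/eqP; exact: H.
apply: (@le_lt_trans _ _ (\int[mu]_x ((72 : R)%:E * (\1_I x)%:E))%E).
  apply: ge0_le_integral => //.
  - move=> x _; exact: integral_ge0.
  - exact: measurable_fun_fubini_tonelli_F.
  - apply: measurable_funeM; exact/measurable_EFinP.
  move=> t _ /=; rewrite /fubini_F indicE.
  case: (boolP (t \in I)) => tI.
    rewrite /= mule1.
    have -> : (fun y => (f \_ (I `*` I)) (t, y)) = (fun y => f (t, y)) \_ I.
      apply/funext => y; rewrite !patchE in_setX tI /=; by [].
    rewrite -integral_mkcond.
    have ht : 0 <= t <= 1 by move: tI; rewrite /I mem_setE in_itv.
    have hb := inner_bound t ht.
    exact: hb.
  rewrite /= mule0 (eq_integral (fun _ => 0%E)); first by rewrite integral0.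
  by move=> y _; rewrite patchE in_setX (negbTE tI).
rewrite ge0_integralZl_EFin //.
  rewrite integral_indic // setIT.
  rewrite -[X in (_ * X)%E]/(mu `[0%R, 1%R]%classic) mu_cc ltr01 -EFinM ltry //.
apply/measurable_EFinP; exact: measurable_indic.
Qed.

Lemma dF (c r : R) : is_derive r 1 (fun r => c * tau r) (c * dtau r).
Proof.
rewrite /tau /dtau; apply: is_derive_eq.
by rewrite /GRing.scale /=; ring.
Qed.

Lemma df (c r : R) : is_derive r 1 (fun r => c * dtau r) (c * (6 - 12 * r)).
Proof.
rewrite /dtau; apply: is_derive_eq.
by rewrite /GRing.scale /=; ring.
Qed.

Lemma der_cont (g dg : R -> R) : (forall x : R, is_derive x (1:R) g (dg x)) -> continuous g.
Proof.
move=> h x; apply: differentiable_continuous; apply/derivable1_diffP.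
exact: ex_derive.
Qed.

Lemma ftc_tau (c s t : R) : s < t ->
  (\int[mu]_(r in `[s, t]%classic) (c * dtau r)%:E = (c * tau t - c * tau s)%:E)%E.
Proof.
move=> st.
have cF : continuous (fun r => c * tau r) by apply: der_cont => x; exact: dF.
have cf : continuous (fun r => c * dtau r) by apply: der_cont => x; exact: df.
rewrite EFinB (@continuous_FTC2 R (fun r => c * dtau r) (fun r => c * tau r)) //.
- by apply: continuous_subspaceT.
- split.
  + move=> x _; exact: (@ex_derive _ _ _ x 1 _ _ (dF c x)).
  + apply: (@cvg_at_right_filter R R (fun r => c * tau r) s); exact: cF.
  + apply: (@cvg_at_left_filter R R (fun r => c * tau r) t); exact: cF.
- move=> x _; rewrite derive1E; exact: (@derive_val _ _ _ _ _ _ _ (dF c x)).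
Qed.

Lemma psi01 x : 0 <= psi x <= 1.
Proof. by rewrite /psi; case: ifP => _; [|case: ifP => _]; apply/andP; split; lra. Qed.

Lemma psi_mon x y : 0 <= x -> x <= y -> y <= 1 -> psi x <= psi y.
Proof.
move=> x0 xy y1; rewrite /psi.
case: ifP => hx; first by case: ifP => _; [|case: ifP => _]; lra.
case: ifP => hx1.
  have -> : (y <= 0) = false by apply/negbTE; rewrite -ltNge; move/negbT: hx; rewrite -ltNge => h; lra.
  by rewrite ifT //; lra.
case: ifP => hy; first by move/negbT: hx; rewrite -ltNge => h; lra.
by case: ifP => _; lra.
Qed.

Lemma tau_lip a b : 0 <= a -> a <= b -> b <= 1 -> `|tau b - tau a| <= 6 * (b - a).
Proof.
move=> a0 ab b1.
set q := 3 * (a + b) - 2 * (a * a + a * b + b * b).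
have e : tau b - tau a = (b - a) * q by rewrite /tau /q; ring.
have hq : `|q| <= 6.
  rewrite ler_norml; apply/andP; split; rewrite /q; nra.
have hba : 0 <= b - a by rewrite subr_ge0.
rewrite e normrM (ger0_norm hba) mulrC.
by apply: ler_wpM2r => //; rewrite subr_ge0.
Qed.

Lemma abs_cont_phi phi0 x : Mon_plus phi0 -> 0 <= x <= 1 ->
  abs_cont01 (fun t => phi phi0 t x).
Proof.
move=> [p01 _ _ _] hx eps eps0.
have /andP[a0 a1] := p01 x hx.
have /andP[q0 q1] := psi01 x.
set c := psi x - phi0 x.
have hc : `|c| <= 1 by rewrite ler_norml /c; apply/andP; split; lra.
exists (eps / 6); first by apply: divr_gt0 => //; lra.
move=> n a b hab hord hsum.
have step : forall i : 'I_n, `|phi phi0 (b i) x - phi phi0 (a i) x| <= 6 * (b i - a i).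
  move=> i; have [h1 [h2 h3]] := hab i (ltn_ord i).
  have -> : phi phi0 (b i) x - phi phi0 (a i) x = (tau (b i) - tau (a i)) * c.
    by rewrite /phi /c; ring.
  rewrite normrM -[X in _ <= X]mulr1.
  apply: ler_pM => //; first exact: tau_lip.
apply: (le_lt_trans (ler_sum _ (fun i _ => step i))).
rewrite -mulr_sumr.
have -> : eps = 6 * (eps / 6) by field.
by rewrite ltr_pM2l //; lra.
Qed.

Lemma w_integrable t : mu.-integrable `[0%R, 1%R]%classic (fun y => (w t y)%:E).
Proof.
have H := integrableD _ (int_cst (al t) 1) (int_ind (ga t - al t) (tau t) 1).
apply: (eq_integrable _ _ _ _ (H _)); try exact: measurable_itv.
by move=> y _; rewrite /= w_aff EFinD.
Qed.

Lemma cdtau_int c : mu.-integrable `[0%R, 1%R]%classic (fun r => (c * dtau r)%:E).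
Proof.
apply: continuous_compact_integrable; first exact: segment_compact.
apply: continuous_subspaceT; apply: der_cont => x; exact: df.
Qed.

Lemma vphi_int phi0 x : Mon_plus phi0 -> 0 <= x <= 1 ->
  mu.-integrable `[0%R, 1%R]%classic (fun r => (v r (phi phi0 r x))%:E).
Proof.
move=> hM hx; have H := cdtau_int (psi x - phi0 x).
apply: (eq_integrable _ _ _ _ H); try exact: measurable_itv.
move=> r; rewrite inE /= in_itv /= => hr.
by rewrite vphi // mulrC.
Qed.

Lemma flow_eq phi0 x s t : Mon_plus phi0 -> 0 <= x <= 1 -> 0 <= s -> s < t -> t <= 1 ->
  (phi phi0 t x - phi phi0 s x)%:E =
    (\int[mu]_(r in `[s, t]%classic) (v r (phi phi0 r x))%:E)%E.
Proof.
move=> hM hx s0 st t1.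
have E : (\int[mu]_(r in `[s, t]%classic) ((psi x - phi0 x) * dtau r)%:E =
  \int[mu]_(r in `[s, t]%classic) (v r (phi phi0 r x))%:E)%E.
  apply: eq_integral => r; rewrite inE /= in_itv /= => /andP[h1 h2].
  have hr : 0 <= r <= 1 by apply/andP; split; lra.
  by rewrite vphi // mulrC.
rewrite -E ftc_tau //; congr (_%:E); rewrite /phi; ring.
Qed.
End S.

Theorem mainTheorem4 (R : realType) (phi0 : R -> R) :
  Mon_plus phi0 ->
  exists (v : R -> R -> R) (phi : R -> R -> R),
    [/\ L2_H10 v, lagrangian_flow v phi,
        (forall x, 0 <= x <= 1 -> phi 0 x = phi0 x),
        (forall x, 0 < x < 1 -> phi 1 x = 1 / 2) &
        (phi 1 0 = 0 /\ phi 1 1 = 1)].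
Proof.
move=> hM; have [p01 pmon p0 p1] := hM.
have tau0 : @tau R 0 = 0 by rewrite /tau; ring.
have tau1 : @tau R 1 = 1 by rewrite /tau; ring.
exists (@v R), (phi phi0); split.
- exists (@w R); split.
  + by apply: measurable_funS (@mw2 R) => //.
  + exact: prod_fin.
  + move=> t ht.
    exact: w_integrable.
  + by move=> t x ht hx; exact: v_int.
  + by move=> t ht; exact: v1.
- split.
  + move=> t x ht hx; have s0 := tau_ge0 t ht; have s1 := tau_le1 t ht.
    have /andP[a0 a1] := p01 x hx; have /andP[q0 q1] := psi01 x.
    rewrite /phi; apply/andP; split; nra.
  + move=> t x y ht x0 xy y1; have s0 := tau_ge0 t ht; have s1 := tau_le1 t ht.
    have h1 := pmon x y x0 xy y1; have h2 := psi_mon x y x0 xy y1.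
    rewrite /phi; nra.
  + by move=> x hx; exact: abs_cont_phi.
  + by move=> x hx; exact: vphi_int.
  + by move=> x s t hx s0 st t1; exact: flow_eq.
- by move=> x hx; rewrite /phi tau0; ring.
- move=> x /andP[x0 x1]; rewrite /phi tau1 /psi.
  rewrite ifF; last by apply/negbTE; rewrite -ltNge.
  rewrite ifF; last by apply/negbTE; rewrite -ltNge.
  ring.
- have h10 : (1 <= 0 :> R) = false by apply/negbTE; rewrite -ltNge ltr01.
  rewrite /phi tau1 /psi p1 p0 h10 !lexx; split; ring.
Qed.
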